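(* Let $S$ be a numerical semigroup with $\mathrm{m}(S)\geq 2$. If $S$ is a MANS-semigroup, then there exists $a\in\mathbb{N}\setminus\{0\}$ such that $\mathrm{r}(S)=a\,\mathrm{m}(S)+1$.
   Context: $\mathbb{N}=\{0,1,2,\ldots\}$. A numerical semigroup is a subset $S\subseteq\mathbb{N}$ closed under addition, containing $0$, with $\mathbb{N}\setminus S$ finite; it has a unique finite minimal system of generators $\mathrm{msg}(S)=\{n_1<n_2<\cdots<n_e\}$, and $\mathrm{m}(S)=n_1$ (multiplicity, the least element of $S\setminus\{0\}$), $\mathrm{r}(S)=n_2$ (ratio). $S$ is a MANS-semigroup if $w(1)<w(2)<\cdots<w(\mathrm{m}(S)-1)$, where $w(i)$ is the least element of $S$ congruent to $i$ modulo $\mathrm{m}(S)$. *)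

(* Defs.v *)
From mathcomp Require Import all_boot.
Set Implicit Arguments. Unset Strict Implicit. Unset Printing Implicit Defensive.

Definition numerical_semigroup (S : nat -> Prop) : Prop :=
  S 0 /\ (forall x y, S x -> S y -> S (x + y)) /\
  (exists F, forall n, F <= n -> S n).

Definition min_gen (S : nat -> Prop) (n : nat) : Prop :=
  S n /\ 0 < n /\ ~ (exists x y, S x /\ S y /\ 0 < x /\ 0 < y /\ n = x + y).

Definition is_multiplicity (S : nat -> Prop) (m : nat) : Prop :=
  S m /\ 0 < m /\ forall x, S x -> 0 < x -> m <= x.

Definition is_ratio (S : nat -> Prop) (r : nat) : Prop :=
  exists m, is_multiplicity S m /\ min_gen S r /\ m < r /\
    forall g, min_gen S g -> m < g -> r <= g.

Definition is_apery_min (S : nat -> Prop) (m i w : nat) : Prop :=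
  S w /\ w = i %[mod m] /\ forall x, S x -> x = i %[mod m] -> w <= x.

Definition MANS (S : nat -> Prop) : Prop :=
  exists m, is_multiplicity S m /\
    forall i j wi wj, 1 <= i -> i < j -> j <= m - 1 ->
      is_apery_min S m i wi -> is_apery_min S m j wj -> wi < wj.

(* Main.v *)
Require Import Defs.
From mathcomp Require Import all_boot.
From mathcomp Require Import zify.
From Stdlib Require Import Classical.

Lemma mult_uniq {S m m'} : is_multiplicity S m -> is_multiplicity S m' -> m = m'.
Proof.
move=> [h1 [h2 h3]] [h1' [h2' h3']].
have := h3 _ h1' h2'; have := h3' _ h1 h2; lia.
Qed.

Lemma minP {P : nat -> Prop} {n} : P n -> exists k, P k /\ forall j, P j -> k <= j.
Proof.
elim/ltn_ind: n => n IH Pn.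
case: (classic (exists j, P j /\ j < n)) => [[j [Pj ljn]]|H].
  exact: IH Pj.
exists n; split => // j Pj; case: (leqP n j) => // ljn.
by exfalso; apply: H; exists j.
Qed.

Theorem lemma2p2 (S : nat -> Prop) (m r : nat) :
  numerical_semigroup S -> is_multiplicity S m -> 2 <= m ->
  is_ratio S r -> MANS S ->
  exists a, 0 < a /\ r = a * m + 1.
Proof.
move=> [S0 [Sadd [F HF]]] Hm m2 [m1 [Hm1 [Hr [mr Hrmin]]]] [m2' [Hm2 HMANS]].
have e1 := mult_uniq Hm Hm1; subst m1.
have e2 := mult_uniq Hm Hm2; subst m2'.
have [Sm [m0 Hmin]] := Hm.
have Hbelow : forall x, S x -> 0 < x -> x < r -> m %| x.
  elim/ltn_ind => x IH Sx x0 xr.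
  case: (classic (min_gen S x)) => [Hg|Hng].
    case: (leqP x m) => xm.
      have := Hmin _ Sx x0 => mx. have -> : x = m by lia. exact: dvdnn.
    have := Hrmin _ Hg xm; lia.
  have [y [z [Sy [Sz [y0 [z0 ex]]]]]] : exists y z, S y /\ S z /\ 0 < y /\ 0 < z /\ x = y + z.
    apply: NNPP => H; apply: Hng; split => //.
  rewrite ex; apply: dvdn_add; [apply: IH | apply: IH] => //; lia.
have Skm : forall k, S (k * m).
  elim => [|k IH]; first by rewrite mul0n.
  by rewrite mulSn; apply: Sadd.
have [Sr [r0 Hrnd]] := Hr.
have ri0 : r %% m <> 0.
  move=> H; apply: Hrnd.
  exists m, (r - m); split => //; split.
    have -> : r - m = (r %/ m).-1 * m.
      have := divn_eq r m; rewrite H addn0 => er.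
      rewrite {1}er; case: (r %/ m) => //= k; rewrite mulSn; lia.
    exact: Skm.
  lia.
case: (eqVneq (r %% m) 1) => [H1|H1].
  exists (r %/ m); split.
    rewrite divn_gt0; lia.
  by rewrite {1}(divn_eq r m) H1.
exfalso.
set i := r %% m.
have im : i < m by rewrite ltn_mod; lia.
have api : is_apery_min S m i r.
  split => //; split; first by rewrite /i modn_mod.
  move=> x Sx xi; case: (leqP r x) => // xr.
  case: (posnP x) => [x0|xpos].
    move: xi; rewrite x0 mod0n /i modn_mod => h; exfalso; apply: ri0; by rewrite h.
  have := Hbelow _ Sx xpos xr; rewrite /dvdn xi /i modn_mod => /eqP; done.
have P0 : S (F * m + 1) /\ F * m + 1 = 1 %[mod m].
  split; first by apply: HF; nia.
  by rewrite modnMDl.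
have [w [[Sw wi] wmin]] := minP (P := fun w => S w /\ w = 1 %[mod m]) P0.
have ap1 : is_apery_min S m 1 w.
  split => //; split => // x Sx xi; exact: wmin.
have wr := HMANS 1 i w r (leqnn 1) (ltac:(lia)) (ltac:(lia)) ap1 api.
case: (posnP w) => [w0|wpos].
  move: wi; rewrite w0 mod0n modn_small //.
have := Hbelow _ Sw wpos wr; rewrite /dvdn wi modn_small //.
Qed.
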